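(* Let $K\subset\mathbb{T}$ be a Kronecker set with more than one point and let $T\in L(C(K))$ be $Tf(z)=zf(z)$. Then $T$ is not weakly supercyclic, while the set $\{aT^k\mathbf{1}+aT^m\mathbf{1}:a\in[0,\infty),\ k,m\in\mathbb{Z}_+\}$ is norm dense in $C(K)$.
   Context: $\mathbb{T}=\{z\in\mathbb{C}:|z|=1\}$; $C(K)$ is the complex Banach space of continuous functions on $K$ with sup norm; $\mathbf{1}$ is the constant function 1. A non-empty compact $K\subset\mathbb{T}$ is a Kronecker set if $\{u_n|_K:n\in\mathbb{Z}_+\}$, $u_n(z)=z^n$, is dense in $C(K,\mathbb{T})$ for the uniform metric. $T$ is weakly supercyclic if for some $x$ the set $\{zT^nx:z\in\mathbb{C},n\in\mathbb{Z}_+\}$ is weakly dense. *)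

(* Defs.v *)
From Stdlib Require Import Reals List.
Open Scope R_scope.

Record Cplx := mkC { Re : R ; Im : R }.

Definition Cadd (z w : Cplx) : Cplx := mkC (Re z + Re w) (Im z + Im w).
Definition Csub (z w : Cplx) : Cplx := mkC (Re z - Re w) (Im z - Im w).
Definition Cmul (z w : Cplx) : Cplx :=
  mkC (Re z * Re w - Im z * Im w) (Re z * Im w + Im z * Re w).
Definition RtoC (a : R) : Cplx := mkC a 0.
Definition Cone : Cplx := RtoC 1.
Definition Cnorm (z : Cplx) : R := sqrt (Re z * Re z + Im z * Im z).
Fixpoint Cpow (z : Cplx) (n : nat) : Cplx :=
  match n with O => Cone | S n => Cmul z (Cpow z n) end.

(* compactness in the metric space C = R^2 (sequential compactness) *)
Definition compact_set (K : Cplx -> Prop) : Prop :=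
  forall u : nat -> Cplx, (forall n, K (u n)) ->
  exists (phi : nat -> nat) (l : Cplx),
    (forall n m, (n < m)%nat -> (phi n < phi m)%nat) /\ K l /\
    forall eps, eps > 0 -> exists N, forall n, (n >= N)%nat ->
      Cnorm (Csub (u (phi n)) l) < eps.

Definition subset_circle (K : Cplx -> Prop) : Prop :=
  forall z, K z -> Cnorm z = 1.

(* An element of C(K) is represented by f : Cplx -> Cplx continuous on K;
   values outside K are irrelevant. *)
Definition cont_on (K : Cplx -> Prop) (f : Cplx -> Cplx) : Prop :=
  forall z, K z -> forall eps, eps > 0 -> exists delta, delta > 0 /\
    forall w, K w -> Cnorm (Csub w z) < delta -> Cnorm (Csub (f w) (f z)) < eps.

Definition Kronecker (K : Cplx -> Prop) : Prop :=
  (exists z, K z) /\ compact_set K /\ subset_circle K /\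
  forall h : Cplx -> Cplx, cont_on K h -> (forall z, K z -> Cnorm (h z) = 1) ->
  forall eps, eps > 0 -> exists n : nat,
    forall z, K z -> Cnorm (Csub (Cpow z n) (h z)) < eps.

Definition Tmul (f : Cplx -> Cplx) : Cplx -> Cplx := fun z => Cmul z (f z).
Fixpoint Titer (n : nat) (f : Cplx -> Cplx) : Cplx -> Cplx :=
  match n with O => f | S n => Tmul (Titer n f) end.

Definition bounded_linear_functional (K : Cplx -> Prop)
    (phi : (Cplx -> Cplx) -> Cplx) : Prop :=
  (forall f g, cont_on K f -> cont_on K g -> (forall z, K z -> f z = g z) ->
     phi f = phi g) /\
  (forall f g, cont_on K f -> cont_on K g ->
     phi (fun z => Cadd (f z) (g z)) = Cadd (phi f) (phi g)) /\
  (forall c f, cont_on K f -> phi (fun z => Cmul c (f z)) = Cmul c (phi f)) /\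
  (exists M, 0 <= M /\ forall f B, cont_on K f -> 0 <= B ->
     (forall z, K z -> Cnorm (f z) <= B) -> Cnorm (phi f) <= M * B).

(* S is dense in C(K) for the weak topology sigma(C(K), C(K)^* ) *)
Definition weakly_dense (K : Cplx -> Prop) (S : (Cplx -> Cplx) -> Prop) : Prop :=
  forall f, cont_on K f ->
  forall phis : list ((Cplx -> Cplx) -> Cplx),
    (forall phi, In phi phis -> bounded_linear_functional K phi) ->
  forall eps, eps > 0 ->
  exists g, S g /\ forall phi, In phi phis -> Cnorm (Csub (phi g) (phi f)) < eps.

Definition Tmul_weakly_supercyclic (K : Cplx -> Prop) : Prop :=
  exists x, cont_on K x /\
    weakly_dense K (fun g => exists (c : Cplx) (n : nat),
                       g = (fun z => Cmul c (Titer n x z))).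

Definition norm_dense (K : Cplx -> Prop) (S : (Cplx -> Cplx) -> Prop) : Prop :=
  forall f, cont_on K f -> forall eps, eps > 0 ->
  exists g, S g /\ forall z, K z -> Cnorm (Csub (f z) (g z)) < eps.

(* Main.v *)
Require Import Defs.
From Stdlib Require Import Reals List Lra Psatz Classical ClassicalEpsilon FunctionalExtensionality PropExtensionality.
Open Scope R_scope.

Lemma Ceq (a b : Cplx) : Re a = Re b -> Im a = Im b -> a = b.
Proof. destruct a, b; simpl; intros; subst; reflexivity. Qed.

Lemma Cnorm_ge0 z : 0 <= Cnorm z.
Proof. unfold Cnorm; apply sqrt_pos. Qed.

Lemma Cnorm_sq z : Cnorm z * Cnorm z = Re z * Re z + Im z * Im z.
Proof. unfold Cnorm; apply sqrt_sqrt; nra. Qed.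

Lemma Cnorm_mul a b : Cnorm (Cmul a b) = Cnorm a * Cnorm b.
Proof.
  unfold Cnorm, Cmul; simpl. rewrite <- sqrt_mult by nra. f_equal; ring.
Qed.

Lemma Cnorm_RtoC r : Cnorm (RtoC r) = Rabs r.
Proof. unfold Cnorm, RtoC; simpl. rewrite <- sqrt_Rsqr_abs. unfold Rsqr. f_equal; ring. Qed.

Lemma Cnorm_Cone : Cnorm Cone = 1.
Proof. unfold Cone. rewrite Cnorm_RtoC. apply Rabs_R1. Qed.

Lemma Cnorm_add a b : Cnorm (Cadd a b) <= Cnorm a + Cnorm b.
Proof.
  pose proof (Cnorm_sq a); pose proof (Cnorm_sq b); pose proof (Cnorm_sq (Cadd a b)).
  pose proof (Cnorm_ge0 a); pose proof (Cnorm_ge0 b); pose proof (Cnorm_ge0 (Cadd a b)).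
  unfold Cadd in *; simpl in *.
  assert (Hcs : Re a * Re b + Im a * Im b <= Cnorm a * Cnorm b).
  { assert (0 <= Cnorm a * Cnorm b) by nra.
    assert ((Re a * Re b + Im a * Im b) * (Re a * Re b + Im a * Im b)
            <= (Cnorm a * Cnorm b) * (Cnorm a * Cnorm b)).
    { replace ((Cnorm a * Cnorm b) * (Cnorm a * Cnorm b)) with
        ((Cnorm a * Cnorm a) * (Cnorm b * Cnorm b)) by ring.
      rewrite H, H0. pose proof (Rle_0_sqr (Re a * Im b - Im a * Re b)). unfold Rsqr in *. nra. }
    nra. }
  nra.
Qed.

Lemma Cnorm_sub_sym a b : Cnorm (Csub a b) = Cnorm (Csub b a).
Proof. unfold Cnorm, Csub; simpl; f_equal; ring. Qed.

Lemma Cnorm_sub_tri a b c : Cnorm (Csub a c) <= Cnorm (Csub a b) + Cnorm (Csub b c).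
Proof.
  replace (Csub a c) with (Cadd (Csub a b) (Csub b c)) by (apply Ceq; simpl; ring).
  apply Cnorm_add.
Qed.

Lemma Cnorm_rev a b : Cnorm a - Cnorm b <= Cnorm (Csub a b).
Proof.
  pose proof (Cnorm_add (Csub a b) b).
  replace (Cadd (Csub a b) b) with a in H by (apply Ceq; simpl; ring). lra.
Qed.

Lemma Cnorm_zero_eq z : Cnorm z = 0 -> z = RtoC 0.
Proof.
  intro H. pose proof (Cnorm_sq z). rewrite H in H0.
  apply Ceq; simpl; nra.
Qed.

Lemma Csub_self_norm a : Cnorm (Csub a a) = 0.
Proof. replace (Csub a a) with (RtoC 0) by (apply Ceq; simpl; ring).
  rewrite Cnorm_RtoC; apply Rabs_R0. Qed.

Lemma Cnorm_pow z n : Cnorm (Cpow z n) = Cnorm z ^ n.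
Proof. induction n; simpl. apply Cnorm_Cone. rewrite Cnorm_mul, IHn; ring. Qed.

Lemma Cnorm_pow_unit z n : Cnorm z = 1 -> Cnorm (Cpow z n) = 1.
Proof. intro H; rewrite Cnorm_pow, H; apply pow1. Qed.

Lemma pow_diff a b k : Cnorm a = 1 -> Cnorm b = 1 ->
  Cnorm (Csub (Cpow a k) (Cpow b k)) <= INR k * Cnorm (Csub a b).
Proof.
  intros Ha Hb. induction k.
  - simpl. rewrite Csub_self_norm; lra.
  - replace (Csub (Cpow a (S k)) (Cpow b (S k))) with
      (Cadd (Cmul a (Csub (Cpow a k) (Cpow b k))) (Cmul (Cpow b k) (Csub a b)))
      by (simpl; apply Ceq; simpl; ring).
    eapply Rle_trans; [apply Cnorm_add|].
    rewrite !Cnorm_mul, Ha, Cnorm_pow_unit by exact Hb. rewrite S_INR. lra.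
Qed.

Definition Cconj z := mkC (Re z) (- Im z).

Lemma Cnorm_conj z : Cnorm (Cconj z) = Cnorm z.
Proof. unfold Cnorm, Cconj; simpl; f_equal; ring. Qed.

Lemma conj_cont K : cont_on K Cconj.
Proof.
  intros z _ eps He. exists eps; split; auto. intros w _ Hw.
  replace (Csub (Cconj w) (Cconj z)) with (Cconj (Csub w z)) by (apply Ceq; simpl; ring).
  rewrite Cnorm_conj; auto.
Qed.

Lemma unit_pow_S z n : Cnorm z = 1 ->
  Cnorm (Csub (Cpow z (S n)) Cone) = Cnorm (Csub (Cpow z n) (Cconj z)).
Proof.
  intro H. pose proof (Cnorm_sq z) as Hs. rewrite H in Hs.
  replace (Csub (Cpow z (S n)) Cone) with (Cmul z (Csub (Cpow z n) (Cconj z))).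
  - rewrite Cnorm_mul, H; ring.
  - simpl. apply Ceq; simpl; nra.
Qed.

Lemma phi_ge (phi : nat -> nat) : (forall n m, (n < m)%nat -> (phi n < phi m)%nat) ->
  forall n, (n <= phi n)%nat.
Proof.
  intros H n; induction n. lia. specialize (H n (S n) ltac:(lia)). lia.
Qed.

Lemma bounded K f : compact_set K -> cont_on K f ->
  exists M, M > 0 /\ forall z, K z -> Cnorm (f z) <= M.
Proof.
  intros HK Hf. apply NNPP; intro H.
  assert (Hs : forall n : nat, {z | K z /\ Cnorm (f z) > INR n + 1}).
  { intro n. apply constructive_indefinite_description.
    apply NNPP; intro Hn. apply H. exists (INR n + 1). split.
    pose proof (pos_INR n); lra.
    intros z Kz. apply Rnot_lt_le. intro Hc. apply Hn. exists z; split; auto. }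
  set (u := fun n => proj1_sig (Hs n)).
  destruct (HK u) as [phi [l [Hphi [Kl Hconv]]]].
  { intro n; unfold u; destruct (Hs n); simpl; tauto. }
  destruct (Hf l Kl 1 ltac:(lra)) as [d [Hd Hcont]].
  destruct (Hconv d Hd) as [N HN].
  destruct (INR_unbounded (Cnorm (f l))) as [n0 Hn0].
  set (n := max N n0).
  assert (Hu : Cnorm (Csub (u (phi n)) l) < d) by (apply HN; unfold n; lia).
  specialize (Hcont _ (proj1 (proj2_sig (Hs (phi n)))) Hu). fold (u (phi n)) in Hcont.
  pose proof (proj2 (proj2_sig (Hs (phi n)))). fold (u (phi n)) in H0.
  pose proof (Cnorm_rev (f (u (phi n))) (f l)).
  assert (INR n0 <= INR (phi n)) by (apply le_INR; pose proof (phi_ge phi Hphi n); unfold n in *; lia).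
  lra.
Qed.

Lemma small_inv e : e > 0 -> exists n, / (INR n + 1) < e.
Proof.
  intro He. destruct (INR_unbounded (/ e)) as [n Hn]. exists n.
  pose proof (pos_INR n).
  apply (Rmult_lt_reg_l (INR n + 1)); [lra|]. rewrite Rinv_r by lra.
  apply (Rmult_lt_reg_l (/ e)). apply Rinv_0_lt_compat; lra.
  replace (/ e * ((INR n + 1) * e)) with (INR n + 1) by (field; lra). lra.
Qed.

Lemma unif_cont K f : compact_set K -> cont_on K f ->
  forall eps, eps > 0 -> exists d, d > 0 /\ forall z w, K z -> K w ->
    Cnorm (Csub w z) < d -> Cnorm (Csub (f w) (f z)) < eps.
Proof.
  intros HK Hf eps He. apply NNPP; intro H.
  assert (Hs : forall n : nat, {p : Cplx * Cplx | K (fst p) /\ K (snd p) /\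
     Cnorm (Csub (snd p) (fst p)) < / (INR n + 1) /\
     Cnorm (Csub (f (snd p)) (f (fst p))) >= eps}).
  { intro n. apply constructive_indefinite_description.
    apply NNPP; intro Hn. apply H. exists (/ (INR n + 1)). split.
    pose proof (pos_INR n); apply Rinv_0_lt_compat; lra.
    intros z w Kz Kw Hzw. apply Rnot_le_lt. intro Hc. apply Hn. exists (z, w); simpl.
    repeat split; auto; lra. }
  set (zs := fun n => fst (proj1_sig (Hs n))).
  set (ws := fun n => snd (proj1_sig (Hs n))).
  destruct (HK zs) as [phi [l [Hphi [Kl Hconv]]]].
  { intro n; unfold zs; destruct (Hs n); simpl; tauto. }
  destruct (Hf l Kl (eps/2) ltac:(lra)) as [d [Hd Hcont]].
  destruct (Hconv (d/2) ltac:(lra)) as [N HN].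
  destruct (small_inv (d/2) ltac:(lra)) as [n0 Hn0].
  set (n := max N n0).
  destruct (proj2_sig (Hs (phi n))) as [Kz [Kw [Hzw Hfzw]]].
  fold (zs (phi n)) (ws (phi n)) in *.
  assert (Hu : Cnorm (Csub (zs (phi n)) l) < d/2) by (apply HN; unfold n; lia).
  assert (Hle : / (INR (phi n) + 1) <= / (INR n0 + 1)).
  { apply Rinv_le_contravar. pose proof (pos_INR n0); lra.
    apply Rplus_le_compat_r, le_INR. pose proof (phi_ge phi Hphi n); unfold n in *; lia. }
  pose proof (Cnorm_sub_tri (ws (phi n)) (zs (phi n)) l).
  assert (Hw : Cnorm (Csub (ws (phi n)) l) < d) by lra.
  pose proof (Hcont _ Kw Hw). pose proof (Hcont _ Kz ltac:(lra)).
  pose proof (Cnorm_sub_tri (f (ws (phi n))) (f l) (f (zs (phi n)))).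
  rewrite (Cnorm_sub_sym (f l)) in H3. lra.
Qed.

Lemma near_pow z z' m : Cnorm z = 1 -> Cnorm z' = 1 ->
  Cnorm (Csub (Csub (Cpow z (S m)) (Cpow z' (S m)))
              (Cmul (RtoC (INR (S m))) (Cmul (Cpow z m) (Csub z z'))))
  <= INR (S m) * INR (S m) * (Cnorm (Csub z z') * Cnorm (Csub z z')).
Proof.
  intros Hz Hz'. pose proof (Cnorm_ge0 (Csub z z')) as Hd0.
  induction m.
  - replace (Csub (Csub (Cpow z 1) (Cpow z' 1))
              (Cmul (RtoC (INR 1)) (Cmul (Cpow z 0) (Csub z z')))) with (RtoC 0)
      by (simpl; apply Ceq; simpl; ring).
    rewrite Cnorm_RtoC, Rabs_R0. simpl. nra.
  - replace (Csub (Csub (Cpow z (S (S m))) (Cpow z' (S (S m))))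
              (Cmul (RtoC (INR (S (S m)))) (Cmul (Cpow z (S m)) (Csub z z')))) with
      (Cadd (Cmul z (Csub (Csub (Cpow z (S m)) (Cpow z' (S m)))
              (Cmul (RtoC (INR (S m))) (Cmul (Cpow z m) (Csub z z')))))
            (Cmul (Csub (Cpow z' (S m)) (Cpow z (S m))) (Csub z z'))).
    2:{ rewrite (S_INR (S m)). change (Cpow z (S (S m))) with (Cmul z (Cpow z (S m))).
        change (Cpow z' (S (S m))) with (Cmul z' (Cpow z' (S m))).
        change (Cpow z (S m)) with (Cmul z (Cpow z m)).
        change (Cpow z' (S m)) with (Cmul z' (Cpow z' m)).
        generalize (Cpow z m) (Cpow z' m) (INR (S m)). intros p q r.
        apply Ceq; simpl; ring. }
    eapply Rle_trans; [apply Cnorm_add|].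
    rewrite !Cnorm_mul, Hz.
    pose proof (pow_diff z' z (S m) Hz' Hz). rewrite (Cnorm_sub_sym z' z) in H.
    pose proof (pos_INR (S m)). rewrite (S_INR (S m)).
    assert (Cnorm (Csub (Cpow z' (S m)) (Cpow z (S m))) * Cnorm (Csub z z')
            <= INR (S m) * Cnorm (Csub z z') * Cnorm (Csub z z')).
    { apply Rmult_le_compat_r; auto. }
    nra.
Qed.

Lemma dich z z' m e : Cnorm z = 1 -> Cnorm z' = 1 ->
  Cnorm (Csub z z') * INR (S m) < /2 ->
  Cnorm (Csub (Cpow z (S m)) (Cpow z' (S m))) < e ->
  Cnorm (Csub z z') * INR (S m) < 2 * e.
Proof.
  intros Hz Hz' Hd He.
  pose proof (near_pow z z' m Hz Hz').
  set (F := Csub (Csub (Cpow z (S m)) (Cpow z' (S m)))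
              (Cmul (RtoC (INR (S m))) (Cmul (Cpow z m) (Csub z z')))) in H.
  assert (HL : Cmul (RtoC (INR (S m))) (Cmul (Cpow z m) (Csub z z')) =
     Cadd (Csub (Cpow z (S m)) (Cpow z' (S m))) (Cmul (RtoC (-1)) F)).
  { unfold F. apply Ceq; simpl; ring. }
  pose proof (Cnorm_add (Csub (Cpow z (S m)) (Cpow z' (S m))) (Cmul (RtoC (-1)) F)).
  rewrite <- HL in H0. rewrite !Cnorm_mul, Cnorm_RtoC, Cnorm_RtoC, Cnorm_pow_unit in H0 by exact Hz.
  replace (Rabs (-1)) with 1 in H0 by (unfold Rabs; destruct (Rcase_abs (-1)); lra). rewrite Rabs_pos_eq in H0 by apply pos_INR.
  pose proof (pos_INR (S m)). pose proof (Cnorm_ge0 (Csub z z')).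
  set (x := Cnorm (Csub z z') * INR (S m)) in *.
  assert (INR (S m) * INR (S m) * (Cnorm (Csub z z') * Cnorm (Csub z z')) = x * x) by (unfold x; ring).
  assert (0 <= x) by (unfold x; nra).
  assert (x * x <= x / 2) by nra. assert (INR (S m) * (1 * Cnorm (Csub z z')) = x) by (unfold x; ring). lra.
Qed.

Lemma decomp w : Cnorm w <= 2 -> exists p q, Cnorm p = 1 /\ Cnorm q = 1 /\ Cadd p q = w.
Proof.
  intro Hw. pose proof (Cnorm_ge0 w) as H0.
  destruct (Req_dec (Cnorm w) 0) as [Hz|Hnz].
  - apply Cnorm_zero_eq in Hz. exists Cone, (RtoC (-1)). split; [apply Cnorm_Cone|].
    split. rewrite Cnorm_RtoC. unfold Rabs; destruct Rcase_abs; lra.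
    rewrite Hz. apply Ceq; simpl; ring.
  - set (r := Cnorm w) in *. assert (Hr : 0 < r) by lra.
    set (e := mkC (Re w / r) (Im w / r)).
    assert (He : Cnorm e = 1).
    { unfold e, Cnorm; simpl. pose proof (Cnorm_sq w). fold r in H.
      replace (Re w / r * (Re w / r) + Im w / r * (Im w / r)) with 1. apply sqrt_1.
      replace (Re w / r * (Re w / r) + Im w / r * (Im w / r)) with ((Re w * Re w + Im w * Im w) / (r * r)) by (field; lra). rewrite <- H. field. lra. }
    set (s := sqrt (1 - r * r / 4)).
    assert (Hs : s * s = 1 - r * r / 4) by (unfold s; apply sqrt_sqrt; nra).
    exists (Cmul e (mkC (r/2) s)), (Cmul e (mkC (r/2) (-s))).
    rewrite !Cnorm_mul, He. split; [|split].
    + unfold Cnorm; simpl. replace (r / 2 * (r / 2) + s * s) with 1 by lra. rewrite sqrt_1; ring.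
    + unfold Cnorm; simpl. replace (r / 2 * (r / 2) + - s * - s) with 1 by nra. rewrite sqrt_1; ring.
    + unfold e; apply Ceq; simpl; field; lra.
Qed.

Lemma Titer_norm x n z : Cnorm z = 1 -> Cnorm (Titer n x z) = Cnorm (x z).
Proof. intro H; induction n; simpl; auto. unfold Tmul. rewrite Cnorm_mul, H, IHn; ring. Qed.

Lemma Titer_one n z : Titer n (fun _ => Cone) z = Cpow z n.
Proof. induction n; simpl; auto. unfold Tmul. rewrite IHn; reflexivity. Qed.

Lemma eval_blf K p : K p -> bounded_linear_functional K (fun g => g p).
Proof.
  intro Kp. split; [|split; [|split]].
  - intros f g _ _ H. apply H, Kp.
  - reflexivity.
  - reflexivity.
  - exists 1; split; [lra|]. intros f B _ HB Hf. rewrite Rmult_1_l. apply Hf, Kp.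
Qed.

Lemma not_wsc_aux K x za zb : subset_circle K -> K za -> K zb -> za <> zb ->
  Cnorm (x zb) <= Cnorm (x za) ->
  ~ weakly_dense K (fun g => exists (c : Cplx) (n : nat),
                       g = (fun z => Cmul c (Titer n x z))).
Proof.
  intros Hc Ka Kb Hab Hle Hd.
  set (d := Cnorm (Csub zb za)).
  assert (Hdp : d > 0).
  { pose proof (Cnorm_ge0 (Csub zb za)). destruct (Req_dec d 0) as [H0|H0]; [|unfold d in *; lra].
    apply Cnorm_zero_eq in H0. exfalso; apply Hab. apply Ceq.
    - assert (Re (Csub zb za) = 0) by (rewrite H0; reflexivity). simpl in H1; lra.
    - assert (Im (Csub zb za) = 0) by (rewrite H0; reflexivity). simpl in H1; lra. }
  assert (Hcf : cont_on K (fun z => Csub z za)).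
  { intros z _ eps He. exists eps; split; auto. intros w _ Hw.
    replace (Csub (Csub w za) (Csub z za)) with (Csub w z) by (apply Ceq; simpl; ring). auto. }
  destruct (Hd _ Hcf ((fun g => g za) :: (fun g => g zb) :: nil)) with (eps := d / 2)
    as [g [[c [n Hg]] Hphi]].
  { intros phi Hin. simpl in Hin. destruct Hin as [<-|[<-|[]]]; apply eval_blf; auto. }
  { lra. }
  pose proof (Hphi _ (or_introl eq_refl)) as H1.
  pose proof (Hphi _ (or_intror (or_introl eq_refl))) as H2. simpl in H1, H2.
  subst g.
  replace (Csub (Cmul c (Titer n x za)) (Csub za za)) with (Cmul c (Titer n x za)) in H1
    by (apply Ceq; simpl; ring).
  rewrite Cnorm_mul, Titer_norm in H1 by (apply Hc; auto).
  pose proof (Cnorm_rev (Csub zb za) (Cmul c (Titer n x zb))).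
  rewrite Cnorm_sub_sym in H2. fold d in H.
  rewrite Cnorm_mul, Titer_norm in H by (apply Hc; auto).
  pose proof (Cnorm_ge0 c).
  assert (Cnorm c * Cnorm (x zb) <= Cnorm c * Cnorm (x za)) by (apply Rmult_le_compat_l; auto).
  lra.
Qed.

Lemma not_wsc K : Kronecker K -> (exists z1 z2, K z1 /\ K z2 /\ z1 <> z2) ->
  ~ Tmul_weakly_supercyclic K.
Proof.
  intros [_ [_ [Hc _]]] [z1 [z2 [K1 [K2 Hne]]]] [x [_ Hd]].
  destruct (Rle_dec (Cnorm (x z2)) (Cnorm (x z1))).
  - apply (not_wsc_aux K x z1 z2); auto.
  - eapply (not_wsc_aux K x z2 z1); eauto. lra.
Qed.

Lemma dense_part K : Kronecker K ->
  norm_dense K (fun g => exists (a : R) (k m : nat), 0 <= a /\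
     g = (fun z => Cadd (Cmul (RtoC a) (Titer k (fun _ => Cone) z))
                        (Cmul (RtoC a) (Titer m (fun _ => Cone) z)))).
Proof.
  intros [_ [HK [Hc Hkr]]] f Hf eps He.
  destruct (bounded K f HK Hf) as [M [HM HfM]].
  destruct (unif_cont K f HK Hf (eps/3) ltac:(lra)) as [du [Hdu Hunif]].
  set (eta := Rmin (1/32) (du/8)).
  assert (Heta : 0 < eta /\ eta <= 1/32 /\ eta <= du/8).
  { unfold eta; split; [apply Rmin_glb_lt; lra|split; [apply Rmin_l|apply Rmin_r]]. }
  destruct (Hkr Cconj (conj_cont K) (fun z Kz => eq_trans (Cnorm_conj z) (Hc z Kz)) eta
     ltac:(lra)) as [n Hn].
  assert (Hpow : forall z, K z -> Cnorm (Csub (Cpow z (S n)) Cone) < eta).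
  { intros z Kz. rewrite unit_pow_S by (apply Hc; auto). apply Hn; auto. }
  set (N := INR (S n)).
  assert (HN : 1 <= N) by (unfold N; rewrite S_INR; pose proof (pos_INR n); lra).
  assert (Hclose : forall z z', K z -> K z' -> Cnorm (Csub z z') * N < /2 ->
            Cnorm (Csub z z') * N < 4 * eta).
  { intros z z' Kz Kz' Hd.
    replace (4 * eta) with (2 * (2 * eta)) by ring.
    apply dich; auto.
    pose proof (Cnorm_sub_tri (Cpow z (S n)) Cone (Cpow z' (S n))).
    rewrite (Cnorm_sub_sym Cone) in H.
    pose proof (Hpow z Kz). pose proof (Hpow z' Kz'). lra. }
  set (Rl := fun z p => K p /\ Cnorm (Csub p z) * N < /2).
  set (rep := fun z => epsilon (inhabits Cone) (Rl z)).
  assert (Hr1 : forall z, K z -> K (rep z) /\ Cnorm (Csub (rep z) z) * N < 4 * eta).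
  { intros z Kz.
    assert (Rl z (rep z)).
    { unfold rep; apply epsilon_spec. exists z. split; auto. rewrite Csub_self_norm. lra. }
    destruct H as [Kr Hr]. split; auto. }
  assert (Hr2 : forall z z', K z -> K z' -> Cnorm (Csub z' z) * N < /2 -> rep z' = rep z).
  { intros z z' Kz Kz' Hzz. unfold rep. f_equal.
    apply functional_extensionality; intro p. apply propositional_extensionality.
    unfold Rl. pose proof (Hclose _ _ Kz' Kz Hzz).
    split; intros [Kp Hp]; split; auto.
    - pose proof (Hclose _ _ Kp Kz' Hp).
      pose proof (Cnorm_sub_tri p z' z). pose proof (Cnorm_ge0 (Csub p z)). nra.
    - pose proof (Hclose _ _ Kp Kz Hp).
      pose proof (Cnorm_sub_tri p z z'). rewrite (Cnorm_sub_sym z z') in H1.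
      pose proof (Cnorm_ge0 (Csub p z')). nra. }
  set (a := M / 2).
  assert (Ha : 0 < a) by (unfold a; lra).
  set (w := fun z => Cmul (RtoC (/ a)) (f (rep z))).
  assert (Hw : forall z, K z -> Cnorm (w z) <= 2).
  { intros z Kz. unfold w. rewrite Cnorm_mul, Cnorm_RtoC, Rabs_pos_eq
      by (apply Rlt_le, Rinv_0_lt_compat; lra).
    pose proof (HfM _ (proj1 (Hr1 z Kz))).
    apply (Rmult_le_reg_l a); auto. rewrite <- Rmult_assoc, Rinv_r by lra. unfold a in *; lra. }
  set (Dec := fun x => epsilon (inhabits (Cone, Cone)) (fun pq => Cnorm x <= 2 ->
      Cnorm (fst pq) = 1 /\ Cnorm (snd pq) = 1 /\ Cadd (fst pq) (snd pq) = x)).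
  set (u := fun z => fst (Dec (w z))).
  set (v := fun z => snd (Dec (w z))).
  assert (Hdec : forall z, K z -> Cnorm (u z) = 1 /\ Cnorm (v z) = 1 /\ Cadd (u z) (v z) = w z).
  { intros z Kz. unfold u, v, Dec.
    pose proof (epsilon_spec (inhabits (Cone, Cone)) (fun pq => Cnorm (w z) <= 2 ->
      Cnorm (fst pq) = 1 /\ Cnorm (snd pq) = 1 /\ Cadd (fst pq) (snd pq) = w z)) as Hsp.
    apply Hsp; [|apply Hw; auto].
    destruct (decomp (w z) (Hw z Kz)) as [p [q Hpq]]. exists (p, q). intros _; exact Hpq. }
  assert (Hlc : forall z z', K z -> K z' -> Cnorm (Csub z' z) < / (2 * N) ->
             u z' = u z /\ v z' = v z).
  { intros z z' Kz Kz' Hd.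
    assert (Cnorm (Csub z' z) * N < / 2).
    { apply (Rmult_lt_compat_r N) in Hd; [|lra].
      replace (/ (2 * N) * N) with (/2) in Hd by (field; lra). exact Hd. }
    unfold u, v, w. rewrite (Hr2 z z'); auto. }
  assert (HNp : / (2 * N) > 0) by (apply Rinv_0_lt_compat; lra).
  assert (Hcu : cont_on K u).
  { intros z Kz e' He'. exists (/ (2 * N)); split; auto. intros z' Kz' Hd.
    rewrite (proj1 (Hlc z z' Kz Kz' Hd)), Csub_self_norm. lra. }
  assert (Hcv : cont_on K v).
  { intros z Kz e' He'. exists (/ (2 * N)); split; auto. intros z' Kz' Hd.
    rewrite (proj2 (Hlc z z' Kz Kz' Hd)), Csub_self_norm. lra. }
  assert (He3 : eps / (3 * a) > 0) by (apply Rdiv_lt_0_compat; lra).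
  destruct (Hkr u Hcu (fun z Kz => proj1 (Hdec z Kz)) _ He3) as [k Hk].
  destruct (Hkr v Hcv (fun z Kz => proj1 (proj2 (Hdec z Kz))) _ He3) as [m Hm].
  eexists. split. { exists a, k, m. split; [lra|reflexivity]. }
  intros z Kz. simpl. rewrite !Titer_one.
  destruct (Hdec z Kz) as [_ [_ Hsum]].
  assert (Hfr : f (rep z) = Cmul (RtoC a) (Cadd (u z) (v z))).
  { rewrite Hsum. unfold w. apply Ceq; simpl; field; lra. }
  replace (Csub (f z) (Cadd (Cmul (RtoC a) (Cpow z k)) (Cmul (RtoC a) (Cpow z m)))) with
    (Cadd (Csub (f z) (f (rep z))) (Cadd (Cmul (RtoC a) (Csub (u z) (Cpow z k)))
                                        (Cmul (RtoC a) (Csub (v z) (Cpow z m)))))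
    by (rewrite Hfr; apply Ceq; simpl; ring).
  eapply Rle_lt_trans; [apply Cnorm_add|].
  assert (Hp1 : Cnorm (Csub (f z) (f (rep z))) < eps / 3).
  { destruct (Hr1 z Kz) as [Kr Hr]. rewrite Cnorm_sub_sym. apply Hunif; auto.
    pose proof (Cnorm_ge0 (Csub (rep z) z)). nra. }
  assert (Hp2 : Cnorm (Cadd (Cmul (RtoC a) (Csub (u z) (Cpow z k)))
       (Cmul (RtoC a) (Csub (v z) (Cpow z m)))) <= 2 * eps / 3).
  { eapply Rle_trans; [apply Cnorm_add|].
    rewrite !Cnorm_mul, Cnorm_RtoC, Rabs_pos_eq by lra.
    rewrite (Cnorm_sub_sym (u z)), (Cnorm_sub_sym (v z)).
    pose proof (Hk z Kz). pose proof (Hm z Kz).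
    assert (a * (eps / (3 * a)) = eps / 3) by (field; lra).
    nra. }
  lra.
Qed.

Theorem mainTheorem14 (K : Cplx -> Prop) :
  Kronecker K ->
  (exists z1 z2, K z1 /\ K z2 /\ z1 <> z2) ->
  ~ Tmul_weakly_supercyclic K /\
  norm_dense K (fun g => exists (a : R) (k m : nat), 0 <= a /\
     g = (fun z => Cadd (Cmul (RtoC a) (Titer k (fun _ => Cone) z))
                        (Cmul (RtoC a) (Titer m (fun _ => Cone) z)))).
Proof.
  intros HK H2. split. apply not_wsc; auto. apply dense_part; auto.
Qed.
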